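(* Let $w$ be a primitive word over a totally ordered alphabet with a special factorization $w=a_1\pi_1a_2\pi_2\cdots\pi_{k-1}a_k$, and suppose $w$ is conjugate to $W=a_k\pi_{k-1}a_{k-1}\cdots\pi_1a_1$. Let $w'$ and $w''$ be two consecutive rows of the Burrows–Wheeler matrix of $w$, with $w'$ immediately preceding $w''$ (so $w''$ is the lexicographically next conjugate after $w'$). Then there exist $i\in\{1,\dots,k-1\}$ and a factorization $\pi_i=uv$ such that $$w'=v\,a_i\pi_{i-1}a_{i-1}\cdots\pi_1a_1\,a_k\pi_{k-1}a_{k-1}\cdots\pi_{i+1}a_{i+1}\,u$$ and $$w''=v\,a_{i+1}\pi_{i+1}a_{i+2}\cdots\pi_{k-1}a_k\,a_1\pi_1a_2\cdots\pi_{i-1}a_i\,u.$$ Moreover, $w$ is the lexicographically smallest and $W$ the lexicographically largest element of their (common) conjugation class.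
   Context: A special factorization of $w$ is a factorization $w=a_1\pi_1a_2\cdots\pi_{k-1}a_k$ where the set of letters occurring in $w$ is $\{a_1<a_2<\cdots<a_k\}$ and $\pi_1,\dots,\pi_{k-1}$ are arbitrary words. Two words are conjugate if they are of the form $xy$ and $yx$. Words are compared in lexicographic order (a proper prefix is smaller). The Burrows–Wheeler matrix of a primitive word $w$ is the matrix whose rows are the distinct conjugates of $w$, listed in increasing lexicographic order, each row consisting of the letters of the corresponding conjugate. *)

(* Defs.v *)
From mathcomp Require Import all_boot all_order.
Set Implicit Arguments. Unset Strict Implicit. Unset Printing Implicit Defensive.
Import Order.TTheory.

Section Words.
Context {d : Order.disp_t} {T : orderType d}.

Fixpoint lexlt (s t : seq T) : bool :=
  match s, t with
  | _, [::] => false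
  | [::], _ :: _ => true
  | x :: s', y :: t' => ((x < y)%O) || ((x == y) && lexlt s' t')
  end.

Definition lexle (s t : seq T) : bool := (s == t) || lexlt s t.

Definition primitive (w : seq T) : Prop :=
  0 < size w /\ forall (u : seq T) (n : nat), 1 < n -> w <> flatten (nseq n u).

Definition conjugate (x y : seq T) : Prop :=
  exists p q : seq T, x = p ++ q /\ y = q ++ p.

(* Burrows-Wheeler matrix: distinct conjugates (rotations) of w, sorted
   increasingly for the lexicographic order; rows listed top to bottom *)
Definition bwm (w : seq T) : seq (seq T) :=
  sort lexle (undup [seq rot n w | n <- iota 0 (size w)]).

(* forward segment  a_j pi_j a_(j+1) ... pi_(l-1) a_l  (j <= l) *)
Definition fseg (a : nat -> T) (pi : nat -> seq T) (j l : nat) : seq T :=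
  a j :: flatten [seq pi m ++ [:: a m.+1] | m <- iota j (l - j)].

(* backward segment  a_l pi_(l-1) a_(l-1) ... pi_j a_j  (j <= l) *)
Definition bseg (a : nat -> T) (pi : nat -> seq T) (l j : nat) : seq T :=
  a l :: flatten [seq pi m ++ [:: a m] | m <- rev (iota j (l - j))].

Definition special_fact (w : seq T) (k : nat) (a : nat -> T) (pi : nat -> seq T)
  : Prop :=
  [/\ (forall i j, 1 <= i -> i < j -> j <= k -> (a i < a j)%O),
      (forall x, x \in w <-> exists2 i, 1 <= i <= k & x = a i)
    & w = fseg a pi 1 k].

End Words.

(* Main.v *)
Require Import Defs.
From mathcomp Require Import all_boot all_order.
From mathcomp Require Import zify.
Import Order.TTheory.
Set Implicit Arguments. Unset Strict Implicit. Unset Printing Implicit Defensive.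

Section Lex.
Context {disp : Order.disp_t} {T : orderType disp}.
Implicit Types s t u v : seq T.

Lemma lexlt_irr s : lexlt s s = false.
Proof. by elim: s => //= x s ->; rewrite ltxx eqxx. Qed.

Lemma lexlt_trans s t u : lexlt s t -> lexlt t u -> lexlt s u.
Proof.
elim: s t u => [|x s IH] [|y t] [|z u] //=.
case/orP=> [xy | /andP[/eqP-> st]]; case/orP=> [yz | /andP[/eqP<- tu]].
- by rewrite (lt_trans xy yz).
- by rewrite xy.
- by rewrite yz.
- by rewrite eqxx (IH _ _ st tu) orbT.
Qed.

Lemma lexlt_total s t : s != t -> lexlt s t || lexlt t s.
Proof.
elim: s t => [|x s IH] [|y t] //=.
case: (ltgtP x y) => //= <-; rewrite eqseq_cons eqxx /=; exact: IH.
Qed.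

Lemma lexlt_cat v s t : lexlt (v ++ s) (v ++ t) = lexlt s t.
Proof. by elim: v => //= x v ->; rewrite ltxx eqxx. Qed.

Lemma lexle_total : total (@lexle _ T).
Proof.
move=> s t; rewrite /lexle; case: (eqVneq s t) => [->|/lexlt_total]; first by rewrite ?eqxx.
by case/orP => ->; rewrite ?orbT.
Qed.

Lemma lexle_trans : transitive (@lexle _ T).
Proof.
move=> t s u; rewrite /lexle.
case/orP=> [/eqP->//|st]; case/orP=> [/eqP<-|tu]; first by rewrite st orbT.
by rewrite (lexlt_trans st tu) orbT.
Qed.

Lemma lexle_refl : reflexive (@lexle _ T).
Proof. by move=> s; rewrite /lexle eqxx. Qed.
End Lex.
Section Seg.
Context {disp : Order.disp_t} {T : orderType disp}.
Variables (a : nat -> T) (pi : nat -> seq T).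

Lemma fseg_nn j : fseg a pi j j = [:: a j].
Proof. by rewrite /fseg subnn. Qed.

Lemma bseg_nn j : bseg a pi j j = [:: a j].
Proof. by rewrite /bseg subnn. Qed.

Lemma fseg_split j m l : j <= m -> m < l ->
  fseg a pi j l = fseg a pi j m ++ pi m ++ fseg a pi m.+1 l.
Proof.
move=> jm ml; rewrite /fseg.
have -> : l - j = (m - j) + (l - m) by lia.
rewrite iotaD (subnKC jm).
have -> : l - m = (l - m.+1).+1 by lia.
by rewrite /= map_cat flatten_cat /= -!catA.
Qed.

Lemma bseg_split j m l : j <= m -> m < l ->
  bseg a pi l j = bseg a pi l m.+1 ++ pi m ++ bseg a pi m j.
Proof.
move=> jm ml; rewrite /bseg.
have -> : l - j = (m - j) + (l - m) by lia.
rewrite iotaD (subnKC jm).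
have -> : l - m = (l - m.+1).+1 by lia.
by rewrite rev_cat /= rev_cons -cats1 !map_cat !flatten_cat /= -!catA ?cats0.
Qed.

End Seg.

Lemma inc_cover (g e : nat -> nat) lo hi :
  (forall i, lo <= i < hi -> g i.+1 = g i + e i + 1) -> lo <= hi ->
  forall q, g lo <= q < g hi -> exists2 i, lo <= i < hi & g i <= q <= g i + e i.
Proof.
elim: hi => [|hi IH] H hle q /andP[h1 h2].
  have e0 : lo = 0 by lia.
  by subst; lia.
case: (eqVneq lo hi.+1) => [e0|ne]; first by subst; lia.
have lohi : lo <= hi by lia.
case: (ltnP q (g hi)) => qh.
  have [i ? ?] := IH (fun i hi => H i ltac:(lia)) lohi q (introT andP (conj h1 qh)).
  by exists i => //; lia.
exists hi; first by lia.
have := H hi (introT andP (conj lohi (ltnSn hi))); lia.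
Qed.

Lemma dec_cover (h e : nat -> nat) lo hi :
  (forall i, lo <= i < hi -> h i = h i.+1 + e i + 1) -> lo <= hi ->
  forall p, h hi <= p < h lo -> exists2 i, lo <= i < hi & h i.+1 <= p <= h i.+1 + e i.
Proof.
elim: hi => [|hi IH] H hle p /andP[h1 h2].
  have e0 : lo = 0 by lia.
  by subst; lia.
case: (eqVneq lo hi.+1) => [e0|ne]; first by subst; lia.
have lohi : lo <= hi by lia.
case: (leqP (h hi) p) => qh.
  have [i ? ?] := IH (fun i hi => H i ltac:(lia)) lohi p (introT andP (conj qh h2)).
  by exists i => //; lia.
exists hi; first by lia.
have := H hi (introT andP (conj lohi (ltnSn hi))); lia.
Qed.

Section Rot.
Context {disp : Order.disp_t} {T : orderType disp}.
Implicit Types s u w : seq T.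

Lemma nth_rot x0 d s i : d <= size s -> i < size s ->
  nth x0 (rot d s) i = nth x0 s ((i + d) %% size s).
Proof.
move=> ds hi; rewrite /rot nth_cat size_drop.
case: ltnP => h.
  by rewrite nth_drop modn_small ?(addnC d) //; lia.
rewrite nth_take; last by lia.
have -> : i + d = (i - (size s - d)) + size s by lia.
by rewrite modnDr modn_small //; lia.
Qed.

Lemma size_flatten_nseq m u : size (flatten (nseq m u)) = m * size u.
Proof. by elim: m => //= m IH; rewrite size_cat IH mulSn. Qed.

Lemma nth_flatten_nseq x0 m u i : i < m * size u ->
  nth x0 (flatten (nseq m u)) i = nth x0 u (i %% size u).
Proof.
elim: m i => [|m IH] i //=; rewrite mulSn => hi.
rewrite nth_cat; case: ltnP => h; first by rewrite modn_small.
rewrite IH; last by lia.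
by rewrite -{2}(subnK h) modnDr.
Qed.

Lemma rot_period w d : 0 < d < size w -> rot d w = w ->
  exists2 m, 1 < m & exists u, w = flatten (nseq m u).
Proof.
case: w => [|x0 w']; first by move=> /andP[] _.
set w := x0 :: w' => hd hrot.
set n := size w.
have n0 : 0 < n by [].
have P1 : forall i, i < n -> nth x0 w i = nth x0 w ((i + d) %% n).
  by move=> i hi; rewrite -{1}hrot nth_rot //; lia.
have P2 : forall mm i, i < n -> nth x0 w i = nth x0 w ((i + mm * d) %% n).
  elim=> [|mm IH] i hi; first by rewrite mul0n addn0 modn_small.
  rewrite mulSnr addnA -modnDml -P1 ?ltn_pmod //; exact: IH.
set g := gcdn d n.
have g0 : 0 < g by rewrite gcdn_gt0; lia.
have gn : g %| n by exact: dvdn_gcdr.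
have gd : g <= d by apply: dvdn_leq; [lia | exact: dvdn_gcdl].
have [b _ hb] := Bezoutr d n0.
have P3 : forall r, r + g < n -> nth x0 w (r + g) = nth x0 w r.
  move=> r hr; rewrite (P2 b) //.
  rewrite -addnA -(divnK hb) addnC modnMDl modn_small //; lia.
have P4 : forall jj r, r + jj * g < n -> nth x0 w (r + jj * g) = nth x0 w r.
  elim=> [|jj IH] r hr; first by rewrite mul0n addn0.
  move: hr; rewrite mulSn (addnC g) addnA => hr.
  rewrite P3 // IH //; lia.
have P5 : forall i, i < n -> nth x0 w i = nth x0 w (i %% g).
  move=> i hi; rewrite {1}(divn_eq i g) addnC P4 // addnC -divn_eq //.
exists (n %/ g).
  rewrite ltnNge; apply/negP => h.
  have := leq_mul h (leqnn g); rewrite mul1n divnK //; lia.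
exists (take g w).
have sg : size (take g w) = g by rewrite size_takel //; lia.
apply: (@eq_from_nth _ x0); first by rewrite size_flatten_nseq sg divnK.
move=> i hi; rewrite nth_flatten_nseq; last by rewrite sg divnK.
by rewrite sg nth_take ?ltn_pmod // -P5.
Qed.

Lemma rot_pos_inj w q q' : primitive w -> q < size w -> q' < size w ->
  rot q w = rot q' w -> q = q'.
Proof.
move=> [_ prim].
wlog: q q' / q <= q'.
  move=> H hq hq' e; case: (leqP q q') => h; first exact: H.
  by symmetry; apply: H => //; lia.
move=> hle hq hq' e.
case: (ltngtP q q') => // hlt; last by lia.
have e2 : rot q' w = rot q (rot (q' - q) w) by rewrite -rotD ?subnKC //; lia.
rewrite e2 in e; have e3 := rot_inj e.
have [m hm [u hu]] := rot_period (d := q' - q) (w := w) ltac:(lia) (esym e3).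
by have := prim u m hm.
Qed.

End Rot.

Section Main.
Context {disp : Order.disp_t} {T : orderType disp}.
Variables (a : nat -> T) (pi : nat -> seq T) (k : nat).

Lemma Yrot i u v : 1 <= i < k -> pi i = u ++ v ->
  v ++ fseg a pi i.+1 k ++ fseg a pi 1 i ++ u =
  rot (size (fseg a pi 1 i) + size u) (fseg a pi 1 k).
Proof.
move=> /andP[i1 ik] huv; rewrite (fseg_split a pi (j:=1) (m:=i) (l:=k)) // huv.
rewrite -size_cat (_ : _ ++ (u ++ v) ++ _ = (fseg a pi 1 i ++ u) ++ (v ++ fseg a pi i.+1 k)).
  by rewrite rot_size_cat -!catA.
by rewrite -!catA.
Qed.

Lemma Xrot i u v : 1 <= i < k -> pi i = u ++ v ->
  v ++ bseg a pi i 1 ++ bseg a pi k i.+1 ++ u =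
  rot (size (bseg a pi k i.+1) + size u) (bseg a pi k 1).
Proof.
move=> /andP[i1 ik] huv; rewrite (bseg_split a pi (j:=1) (m:=i) (l:=k)) // huv.
rewrite -size_cat (_ : _ ++ (u ++ v) ++ _ = (bseg a pi k i.+1 ++ u) ++ (v ++ bseg a pi i 1)).
  by rewrite rot_size_cat -!catA.
by rewrite -!catA.
Qed.

Lemma fsize_lt i i' : 1 <= i -> i < i' ->
  size (fseg a pi 1 i) + size (pi i) < size (fseg a pi 1 i').
Proof.
move=> i1 ii; rewrite (fseg_split a pi (j:=1) (m:=i) (l:=i')) // !size_cat /fseg /=.
lia.
Qed.

End Main.

Theorem lemma4p5 (d : Order.disp_t) (T : orderType d) (w : seq T) (k : nat)
  (a : nat -> T) (pi : nat -> seq T) (j : nat) :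
  primitive w ->
  special_fact w k a pi ->
  conjugate w (bseg a pi k 1) ->
  j.+1 < size (bwm w) ->
  let w' := nth [::] (bwm w) j in
  let w'' := nth [::] (bwm w) j.+1 in
  (exists2 i, 1 <= i <= k.-1 &
     exists u v : seq T, pi i = u ++ v /\
       w' = v ++ bseg a pi i 1 ++ bseg a pi k i.+1 ++ u /\
       w'' = v ++ fseg a pi i.+1 k ++ fseg a pi 1 i ++ u) /\
  (forall z, conjugate w z -> lexle w z /\ lexle z (bseg a pi k 1)).
Proof.
move=> prim [ainc amem wdef] [p0 [q0 [wpq Wqp]]] hj; cbv zeta.
have n0 : 0 < size w by case: prim.
set W := bseg a pi k 1 in Wqp *.
have Wrot : W = rot (size p0) w by rewrite Wqp wpq rot_size_cat.
set n := size w.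
have sW : size W = n by rewrite Wrot size_rot.
have k1 : 1 <= k.
  have : a 1 \in w by rewrite wdef /fseg mem_head.
  by case/amem => i /andP[] ? ? _; lia.
set s := bwm w.
have memS : forall z, z \in s <-> exists m, z = rot m w.
  move=> z; rewrite /s /bwm mem_sort mem_undup; split.
    by case/mapP => m _ ->; exists m.
  case=> m ->; case: (ltnP m n) => hm.
    by apply/mapP; exists m; rewrite // mem_iota.
  rewrite rot_oversize //; apply/mapP; exists 0; rewrite ?rot0 // mem_iota; lia.
set N := size s.
have srt : sorted lexle s := sort_sorted lexle_total _.
have us : uniq s by rewrite sort_uniq undup_uniq.
have leS : forall i j, i <= j -> j < N -> lexle (nth [::] s i) (nth [::] s j).
  move=> i j' ij jN.
  apply: (@sorted_leq_nth _ lexle lexle_trans lexle_refl [::] s srt) => //.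
  by rewrite inE; lia.
have idx : forall i j, i < N -> j < N -> lexlt (nth [::] s i) (nth [::] s j) -> i < j.
  move=> i j' iN jN h; case: (ltnP i j') => // ji.
  have := leS j' i ji iN; rewrite /lexle; case/orP => [/eqP e|h2].
    by rewrite e lexlt_irr in h.
  by have := lexlt_trans h h2; rewrite lexlt_irr.
pose E x y := exists i, 1 <= i < k /\ exists u v, pi i = u ++ v /\
   x = v ++ bseg a pi i 1 ++ bseg a pi k i.+1 ++ u /\
   y = v ++ fseg a pi i.+1 k ++ fseg a pi 1 i ++ u.
have Fa : forall x y, E x y -> lexlt x y.
  move=> x y [i [/andP[i1 ik] [u [v [_ [-> ->]]]]]].
  by rewrite lexlt_cat /bseg /fseg /= ainc //; lia.
have wW : w = rotr (size p0) W by rewrite Wrot rotK.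
rewrite /rotr in wW.
have Fe : forall x y, E x y -> x \in s /\ y \in s.
  move=> x y [i [ik [u [v [huv [-> ->]]]]]]; split; apply/memS.
    by rewrite (Xrot a ik huv) -/W Wrot rot_rot_add; eexists; reflexivity.
  by rewrite (Yrot a ik huv) -wdef; eexists; reflexivity.
have nk : size (fseg a pi 1 k) = n by rewrite -wdef.
have Fd : forall x x' y, E x y -> E x' y -> x = x'.
  move=> x x' y [i [ik [u [v [huv [-> ->]]]]]] [i' [ik' [u' [v' [huv' [-> e]]]]]].
  rewrite (Yrot a ik huv) (Yrot a ik' huv') -wdef in e.
  have su : size u <= size (pi i) by rewrite huv size_cat leq_addr.
  have su' : size u' <= size (pi i') by rewrite huv' size_cat leq_addr.
  move: ik ik' => /andP[i1 ik] /andP[i1' ik'].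
  have hp := fsize_lt a pi i1 ik; have hp' := fsize_lt a pi i1' ik'.
  have b1 : size (fseg a pi 1 i) + size u < size w by rewrite -/n; lia.
  have b2 : size (fseg a pi 1 i') + size u' < size w by rewrite -/n; lia.
  have pe := rot_pos_inj prim b1 b2 e.
  have ii : i = i'.
    case: (ltngtP i i') => // h.
      by have := fsize_lt a pi i1 h; lia.
    by have := fsize_lt a pi i1' h; lia.
  subst i'.
  have uu : size u = size u' by lia.
  have e2 := etrans (esym huv) huv'.
  have eu : u = u'.
    by have := congr1 (take (size u)) e2; rewrite take_size_cat // uu take_size_cat.
  have ev : v = v'.
    by have := congr1 (drop (size u)) e2; rewrite drop_size_cat // uu drop_size_cat.
  by subst.
have Fb : forall x, x \in s -> x != W -> exists y, E x y.
  move=> x /memS [m ->] hW.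
  have [p e] : exists p, rot m w = rot p W.
    by exists (rot_add W (size W - size p0) m); rewrite {1}wW rot_rot_add.
  move: hW; rewrite e => hW.
  case: (ltnP p n) => hp; last by rewrite rot_oversize ?eqxx // sW in hW.
  case: (posnP p) => p0'; first by rewrite p0' rot0 eqxx in hW.
  have H : forall i, 1 <= i < k ->
      size (bseg a pi k i) = size (bseg a pi k i.+1) + size (pi i) + 1.
    move=> i /andP[i1 ik].
    by rewrite (bseg_split a pi (j:=i) (m:=i) (l:=k)) // !size_cat bseg_nn /=; lia.
  have hk : size (bseg a pi k k) = 1 by rewrite bseg_nn.
  have hr : size (bseg a pi k k) <= p < size (bseg a pi k 1).
    by rewrite hk -/W sW; apply/andP; split; lia.
  have [i /andP[i1 ik] /andP[hl hu]] :=
    dec_cover (h := fun i => size (bseg a pi k i)) (e := fun i => size (pi i)) H k1 hr.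
  exists (drop (p - size (bseg a pi k i.+1)) (pi i) ++ fseg a pi i.+1 k ++ fseg a pi 1 i
          ++ take (p - size (bseg a pi k i.+1)) (pi i)).
  exists i; split; first by lia.
  exists (take (p - size (bseg a pi k i.+1)) (pi i)), (drop (p - size (bseg a pi k i.+1)) (pi i)).
  split; first by rewrite cat_take_drop.
  split => //.
  rewrite (Xrot a (i:=i)) ?cat_take_drop ?i1 ?ik // -/W size_takel; last by lia.
  congr rot; lia.
have Fc : forall y, y \in s -> y != w -> exists x, E x y.
  move=> y /memS [m ->] hw.
  case: (ltnP m n) => hm; last by rewrite rot_oversize ?eqxx in hw.
  case: (posnP m) => m0; first by rewrite m0 rot0 eqxx in hw.
  have H : forall i, 1 <= i < k ->
      size (fseg a pi 1 i.+1) = size (fseg a pi 1 i) + size (pi i) + 1.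
    move=> i /andP[i1 ik].
    by rewrite (fseg_split a pi (j:=1) (m:=i) (l:=i.+1)) // !size_cat fseg_nn /=; lia.
  have h1 : size (fseg a pi 1 1) = 1 by rewrite fseg_nn.
  have hr : size (fseg a pi 1 1) <= m < size (fseg a pi 1 k).
    by rewrite h1 nk; apply/andP; split; lia.
  have [i /andP[i1 ik] /andP[hl hu]] :=
    inc_cover (g := fun i => size (fseg a pi 1 i)) (e := fun i => size (pi i)) H k1 hr.
  exists (drop (m - size (fseg a pi 1 i)) (pi i) ++ bseg a pi i 1 ++ bseg a pi k i.+1
          ++ take (m - size (fseg a pi 1 i)) (pi i)).
  exists i; split; first by lia.
  exists (take (m - size (fseg a pi 1 i)) (pi i)), (drop (m - size (fseg a pi 1 i)) (pi i)).
  split; first by rewrite cat_take_drop.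
  split => //.
  rewrite (Yrot a (i:=i)) ?cat_take_drop ?i1 ?ik // -wdef size_takel; last by lia.
  congr rot; lia.
have wS : w \in s by apply/memS; exists 0; rewrite rot0.
have N0 : 0 < N by move: wS; rewrite -index_mem => /(leq_ltn_trans (leq0n _)).
have M1 : nth [::] s N.-1 = W.
  apply/eqP; apply/negPn/negP => hW.
  have zS : nth [::] s N.-1 \in s by apply: mem_nth; rewrite -/N; lia.
  have [y Exy] := Fb _ zS hW.
  have [_ yS] := Fe _ _ Exy.
  have hy := Fa _ _ Exy; rewrite -(nth_index [::] yS) in hy.
  have iy : index y s < N by rewrite index_mem.
  have := idx N.-1 (index y s) ltac:(lia) iy hy.
  lia.
have M2 : nth [::] s 0 = w.
  apply/eqP; apply/negPn/negP => hw.
  have zS : nth [::] s 0 \in s by apply: mem_nth; rewrite -/N; lia.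
  have [x Exy] := Fc _ zS hw.
  have [xS _] := Fe _ _ Exy.
  have hx := Fa _ _ Exy; rewrite -(nth_index [::] xS) in hx.
  have ix : index x s < N by rewrite index_mem.
  by have := idx (index x s) 0 ix N0 hx.
have M3 : forall t j, N.-1 - j <= t -> j.+1 < N -> E (nth [::] s j) (nth [::] s j.+1).
  elim=> [|t IH] j' hjt hjN; first by lia.
  have sjW : nth [::] s j' != W.
    apply/eqP => e.
    have : nth [::] s j' == nth [::] s N.-1 by rewrite e M1.
    rewrite nth_uniq //; try rewrite -/N; lia.
  have jS : nth [::] s j' \in s by apply: mem_nth; rewrite -/N; lia.
  have [y Exy] := Fb _ jS sjW.
  have [_ yS] := Fe _ _ Exy.
  have ym := esym (nth_index [::] yS).
  have mN : index y s < N by rewrite index_mem.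
  have jm : j' < index y s.
    by apply: idx => //; [lia | rewrite -ym; exact: Fa].
  case: (ltngtP (index y s) j'.+1) => hm; first by lia.
    have Em := IH (index y s).-1 ltac:(lia) ltac:(lia).
    rewrite prednK in Em; last by lia.
    rewrite -ym in Em.
    have := Fd _ _ _ Exy Em => /eqP; rewrite nth_uniq //; try rewrite -/N; lia.
  by rewrite -hm -ym.
split.
  have [i [ik [u [v [huv [e1 e2]]]]]] := M3 _ j (leqnn _) hj.
  exists i; first by lia.
  by exists u, v.
move=> z [p [q [hw hz]]].
have zS : z \in s by apply/memS; exists (size p); rewrite hz hw rot_size_cat.
have tN : index z s < N by rewrite index_mem.
have h1 := leS 0 (index z s) (leq0n _) tN; rewrite M2 nth_index // in h1.
have h2 := leS (index z s) N.-1 ltac:(lia) ltac:(lia); rewrite M1 nth_index // in h2.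
Qed.
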